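(* Let $\nu$ be a positive integer and let $\alpha>1$, $\beta>1$ be real numbers satisfying $$\frac{2\nu+1}{2\lfloor \nu/\beta\rfloor+1}\leq\alpha\leq\frac{2\nu+1}{\sqrt{2}}.$$ Then $$S_{1}(\alpha):=\sup_{t\in\left(0,\frac{\alpha}{2\nu+1}\right]}\frac{\left|(-1)^{\nu}(2\nu+1)t-T_{2\nu+1}(t)\right|}{[(2\nu+1)t]^{2}}\leq u_1(\nu)\,\alpha+u_2(\nu),$$ where $$u_{1}(\nu)=\frac{(12\beta-8)\nu^{3}+(12\beta^{3}+18\beta)\nu^{2}+2\beta^{2}\nu}{3\beta^{3}(2\nu+1)^{3}},\qquad u_{2}(\nu)=\frac{2(\beta-1)^{2}\nu^{2}+2\beta(\beta-1)\nu}{\beta^{2}(2\nu+1)^{2}}.$$ In particular, taking $\beta=\tfrac52$, for every integer $\nu\ge 31$ and every $\alpha$ with $\frac{2\nu+1}{2\lfloor 2\nu/5\rfloor+1}\le\alpha\le\frac{2\nu+1}{\sqrt2}$, $$S_1(\alpha)\leq\frac{2344592}{31255875}\alpha+\frac{6076}{33075}.$$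
   Context: $T_k$ denotes the Chebyshev polynomial of the first kind: $T_0(t)=1$, $T_1(t)=t$, $T_{k+1}(t)=2tT_k(t)-T_{k-1}(t)$. $\lfloor m\rfloor$ denotes the largest integer not exceeding $m$. *)

(* Defs.v *)
From Stdlib Require Import Reals.
Open Scope R_scope.

Fixpoint cheb (k : nat) (t : R) {struct k} : R :=
  match k with
  | O => 1
  | S O => t
  | S ((S k'') as k') => 2 * t * cheb k' t - cheb k'' t
  end.

(* floor of a real number (Int_part x = up x - 1 is the floor) *)
Definition floorR (x : R) : R := IZR (Int_part x).

Definition ratio1 (nu : nat) (t : R) : R :=
  Rabs ((-1) ^ nu * (2 * INR nu + 1) * t - cheb (2 * nu + 1) t)
  / ((2 * INR nu + 1) * t) ^ 2.

(* "S_1(alpha) <= c" : c is an upper bound of the set whose supremum is S_1(alpha). *)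
Definition S1_le (nu : nat) (alpha c : R) : Prop :=
  forall t : R, 0 < t <= alpha / (2 * INR nu + 1) -> ratio1 nu t <= c.

Definition u1 (beta : R) (nu : nat) : R :=
  let n := INR nu in
  ((12 * beta - 8) * n ^ 3 + (12 * beta ^ 3 + 18 * beta) * n ^ 2 + 2 * beta ^ 2 * n)
  / (3 * beta ^ 3 * (2 * n + 1) ^ 3).

Definition u2 (beta : R) (nu : nat) : R :=
  let n := INR nu in
  (2 * (beta - 1) ^ 2 * n ^ 2 + 2 * beta * (beta - 1) * n)
  / (beta ^ 2 * (2 * n + 1) ^ 2).

(* Main.v *)
Require Import Defs.
From Stdlib Require Import Reals Lra Psatz.
Open Scope R_scope.

Definition pp (x : R) := x/6 - x^3/120 + x^5/5040.
Definition EE (a : R) := (3*a^2-3*a+1)/(6*a^2).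

Lemma f_pos a : 1 <= a <= 3 -> 0 <= 2520*a^2 - 2520*a + 840 - 840*a^3 + 42*a^5 - a^7.
Proof.
  intros [h1 h3]. set (u := a - 1).
  assert (hu0 : 0 <= u) by (unfold u; lra).
  assert (hu2 : u <= 2) by (unfold u; lra).
  replace a with (1+u) by (unfold u; ring).
  assert (A1 : 0 <= u^2*(175*u^2-455*u+399)).
  { apply Rmult_le_pos. nra. nra. }
  assert (A2 : 0 <= u^5*(21-7*u-u^2)).
  { apply Rmult_le_pos. apply pow_le; lra. nra. }
  assert (A3 : 0 <= 203*u) by lra.
  nra.
Qed.

Lemma EE_pp a : 1 <= a <= 3 -> pp a <= EE a.
Proof.
  intros h. pose proof (f_pos a h) as F.
  assert (ha : 0 < a^2) by nra.
  assert (EE a - pp a = (2520*a^2 - 2520*a + 840 - 840*a^3 + 42*a^5 - a^7)/(5040*a^2)).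
  { unfold EE, pp. field. lra. }
  assert (0 <= (2520*a^2 - 2520*a + 840 - 840*a^3 + 42*a^5 - a^7)/(5040*a^2)).
  { unfold Rdiv; apply Rmult_le_pos; [lra| apply Rlt_le, Rinv_0_lt_compat; lra]. }
  lra.
Qed.

Lemma Qa a k : 1 <= a <= 3 -> 0 < k <= 1/3 ->
  pp a + a*k^2/4 <= (1-k)^2*(EE a + 5*a*k/6) + 3/4*k*(1-k).
Proof.
  intros ha hk. pose proof (EE_pp a ha) as H1.
  set (e := EE a) in *.
  assert (he : e * (6*a^2) = 3*a^2-3*a+1) by (unfold e, EE; field; lra).
  assert (he2 : e <= 2/5) by nra.
  assert (he1 : 0 <= e) by nra.
  assert (X : 0 <= (5*a/6 + 3/4 - 2*e) + k*(e - 23*a/12 - 3/4) + 5*a*k^2/6).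
  { assert (k*(e - 23*a/12 - 3/4) >= (1/3)*(e - 23*a/12 - 3/4)) by nra. nra. }
  assert (0 <= k * ((5*a/6 + 3/4 - 2*e) + k*(e - 23*a/12 - 3/4) + 5*a*k^2/6)) by nra.
  nra.
Qed.

Lemma Qb a k : 3 <= a -> 0 < k <= 1/3 ->
  1/3 + a*k^2/4 <= (1-k)^2*(EE a + 5*a*k/6) + 3/4*k*(1-k).
Proof.
  intros ha hk.
  set (e := EE a) in *.
  assert (he : e * (6*a^2) = 3*a^2-3*a+1) by (unfold e, EE; field; lra).
  assert (ha2 : 0 < 6*a^2) by nra.
  assert (he2 : e <= 1/2).
  { assert ((e - 1/2)*(6*a^2) <= 0) by nra.
    destruct (Rle_dec e (1/2)); auto. exfalso. assert (0 < (e-1/2)*(6*a^2)) by (apply Rmult_lt_0_compat; lra). lra. }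
  assert (he1 : 19/54 <= e).
  { assert (0 <= (e - 19/54)*(6*a^2)) by nra.
    destruct (Rle_dec (19/54) e); auto. exfalso. assert ((e-19/54)*(6*a^2) < 0).
    { assert (0 < (19/54 - e)*(6*a^2)) by (apply Rmult_lt_0_compat; lra). lra. } lra. }
  assert (X : 0 <= (5*a/6 + 3/4 - 2*e) + k*(e - 23*a/12 - 3/4) + 5*a*k^2/6).
  { assert (k*(e - 23*a/12 - 3/4) >= (1/3)*(e - 23*a/12 - 3/4)) by nra. nra. }
  assert (0 <= k * ((5*a/6 + 3/4 - 2*e) + k*(e - 23*a/12 - 3/4) + 5*a*k^2/6)) by nra.
  nra.
Qed.

Lemma G_id b m a w k : b <> 0 -> a <> 0 -> 2*m+1 <> 0 -> w = /b -> k = /(2*m+1) ->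
  ((12 * b - 8) * m ^ 3 + (12 * b ^ 3 + 18 * b) * m ^ 2 + 2 * b ^ 2 * m)
  / (3 * b ^ 3 * (2 * m + 1) ^ 3) * a +
  (2 * (b - 1) ^ 2 * m ^ 2 + 2 * b * (b - 1) * m) / (b ^ 2 * (2 * m + 1) ^ 2)
  - ((1-k)^2*(EE a + 5*a*k/6) + 3/4*k*(1-k)) =
  (1-k)^2 * ((a*w-1)^2*(3*a-1-2*a*w)/(6*a^2)) + (1-k)^2*k*a*(1-w)^2*(1+2*w)/6
  + (3/2*a*w^2*(1-k)^2*k + (1-w)*(1-k)*k - 3/4*k*(1-k)) + 2*w*m*a/(3*(2*m+1)^3).
Proof.
  intros hb ha hN -> ->. unfold EE. field. auto.
Qed.

Lemma G_bound b nu a : 1 < b -> (1 <= nu)%nat -> 1 <= a ->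
  let k := /(2*INR nu+1) in
  (1-k)^2*(EE a + 5*a*k/6) + 3/4*k*(1-k) <= u1 b nu * a + u2 b nu.
Proof.
  intros hb hnu ha k.
  assert (hm : 1 <= INR nu) by (apply (le_INR 1); auto).
  set (m := INR nu) in *.
   unfold u1, u2. fold m. cbv zeta.
  set (w := /b) in *.
  assert (hw0 : 0 < w) by (unfold w; apply Rinv_0_lt_compat; lra).
  assert (hw1 : w < 1) by (unfold w; rewrite <- Rinv_1; apply Rinv_lt_contravar; lra).
  assert (hN : 3 <= 2*m+1) by lra.
  assert (hk0 : 0 < k) by (unfold k; apply Rinv_0_lt_compat; lra).
  assert (hk1 : k <= 1/3).
  { unfold k. apply (Rmult_le_reg_l (2*m+1)). lra. rewrite Rinv_r by lra. lra. }
  assert (hk3 : k * (2*m+1) = 1) by (unfold k; field; lra).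
  assert (T1 : 0 <= (1-k)^2 * ((a*w-1)^2*(3*a-1-2*a*w)/(6*a^2))).
  { apply Rmult_le_pos. nra. unfold Rdiv. apply Rmult_le_pos.
    apply Rmult_le_pos. apply pow2_ge_0.
    assert (a*w < a*1) by (apply Rmult_lt_compat_l; lra). lra.
    apply Rlt_le, Rinv_0_lt_compat. nra. }
  assert (T2 : 0 <= (1-k)^2*k*a*(1-w)^2*(1+2*w)/6).
  { assert (0 <= (1-k)^2*k*a) by (apply Rmult_le_pos; [apply Rmult_le_pos|]; try apply pow2_ge_0; lra).
    assert (0 <= (1-w)^2*(1+2*w)) by (apply Rmult_le_pos; [apply pow2_ge_0|lra]).
    assert (0 <= ((1-k)^2*k*a)*((1-w)^2*(1+2*w))) by (apply Rmult_le_pos; lra). lra. }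
  assert (T3 : 0 <= 3/2*a*w^2*(1-k)^2*k + (1-w)*(1-k)*k - 3/4*k*(1-k)).
  { assert (h15 : 1 <= 3/2*a*(1-k)).
    { assert (0 <= (a-1)*((1-k)-2/3)) by (apply Rmult_le_pos; lra). nra. }
    assert (0 <= w^2*(3/2*a*(1-k) - 1)) by (apply Rmult_le_pos; [apply pow2_ge_0|lra]).
    assert (0 <= (w-1/2)^2) by apply pow2_ge_0.
    assert (0 <= 3/2*a*w^2*(1-k) + (1-w) - 3/4) by nra.
    assert (0 <= k*(1-k)) by nra.
    assert (0 <= (k*(1-k))*(3/2*a*w^2*(1-k) + (1-w) - 3/4)) by (apply Rmult_le_pos; lra).
    nra. }
  assert (T4 : 0 <= 2*w*m*a/(3*(2*m+1)^3)).
  { unfold Rdiv. apply Rmult_le_pos. assert (0 <= w*m) by nra. nra.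
    apply Rlt_le, Rinv_0_lt_compat. assert (0 < (2*m+1)^3) by (apply pow_lt; lra). lra. }
  assert (hid := G_id b m a w k ltac:(lra) ltac:(lra) ltac:(lra) eq_refl eq_refl).
  lra.
Qed.

Lemma pp_mono x y : 0 <= x -> x <= y -> y <= 3 -> pp x <= pp y.
Proof.
  intros h0 h1 h3.
  set (S2 := x^2 + x*y + y^2). set (S4 := x^4 + x^3*y + x^2*y^2 + x*y^3 + y^4).
  assert (HS : 9*S4 - 5*S2^2 = (x-y)^2*(4*x^2+7*x*y+4*y^2)) by (unfold S2, S4; ring).
  assert (0 <= (x-y)^2*(4*x^2+7*x*y+4*y^2)).
  { apply Rmult_le_pos. apply pow2_ge_0. nra. }
  assert (HS2 : 0 <= S2) by (unfold S2; nra).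
  assert (Phi : 0 <= 1/6 - S2/120 + S4/5040).
  { assert (0 <= (S2 - 189/5)^2) by apply pow2_ge_0. assert (0 <= 1/6 - S2/120 + S2^2/9072) by nra. nra. }
  assert (E : pp y - pp x = (y-x)*(1/6 - S2/120 + S4/5040)) by (unfold pp, S2, S4; field).
  assert (0 <= (y-x)*(1/6 - S2/120 + S4/5040)) by (apply Rmult_le_pos; lra).
  lra.
Qed.

Lemma pp3 x : 0 <= x <= 3 -> pp x <= 1/3.
Proof. intros h. assert (pp x <= pp 3) by (apply pp_mono; lra). unfold pp in *. lra. Qed.

Lemma cheb_cos_aux k phi :
  cheb k (cos phi) = cos (INR k * phi) /\ cheb (S k) (cos phi) = cos (INR (S k) * phi).
Proof.
  induction k as [|k [IH1 IH2]].
  - simpl. split. rewrite Rmult_0_l, cos_0. reflexivity. rewrite Rmult_1_l. reflexivity.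
  - split. exact IH2.
    change (cheb (S (S k)) (cos phi)) with (2 * cos phi * cheb (S k) (cos phi) - cheb k (cos phi)).
    rewrite IH1, IH2.
    replace (INR (S (S k)) * phi) with (INR (S k) * phi + phi) by (rewrite !S_INR; ring).
    replace (INR k * phi) with (INR (S k) * phi - phi) by (rewrite !S_INR; ring).
    rewrite cos_plus, cos_minus. ring.
Qed.

Lemma cheb_cos k phi : cheb k (cos phi) = cos (INR k * phi).
Proof. apply cheb_cos_aux. Qed.

Lemma cos_plus_nPI n x : cos (x + INR n * PI) = (-1)^n * cos x.
Proof.
  induction n as [|n IH].
  - simpl. rewrite Rmult_0_l, Rplus_0_r. ring.
  - rewrite S_INR. replace (x + (INR n + 1) * PI) with ((x + INR n * PI) + PI) by ring.
    rewrite neg_cos, IH. simpl. ring.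
Qed.

Lemma cheb_sin nu th :
  cheb (2*nu+1) (sin th) = (-1)^nu * sin ((2*INR nu+1) * th).
Proof.
  rewrite <- cos_shift, cheb_cos.
  replace (INR (2*nu+1) * (PI/2 - th)) with ((PI/2 - (2*INR nu+1)*th) + INR nu * PI).
  2:{ rewrite plus_INR, mult_INR. simpl. field. }
  rewrite cos_plus_nPI, cos_shift. reflexivity.
Qed.

Lemma abs_sin_le u : 0 <= u -> Rabs (sin u) <= u.
Proof.
  intros hu. destruct (Rle_dec u 1).
  - assert (0 <= sin u).
    { apply sin_ge_0. lra. pose proof PI2_1. lra. }
    rewrite Rabs_right by lra.
    destruct (Req_dec u 0). subst. rewrite sin_0. lra.
    left. apply sin_lt_x. lra.
  - pose proof (SIN_bound u). apply Rabs_le. lra.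
Qed.

Lemma sin_lip x y : x <= y -> Rabs (sin x - sin y) <= y - x.
Proof.
  intros h.
  replace (sin x - sin y) with (- (2 * cos ((x+y)/2) * sin ((y-x)/2))).
  2:{ assert (E1 : sin x = sin ((x+y)/2 - (y-x)/2)) by (f_equal; field).
      assert (E2 : sin y = sin ((x+y)/2 + (y-x)/2)) by (f_equal; field).
      rewrite E1, E2, sin_minus, sin_plus. ring. }
  rewrite Rabs_Ropp, !Rabs_mult, Rabs_right by lra.
  pose proof (abs_sin_le ((y-x)/2) ltac:(lra)).
  assert (Rabs (cos ((x+y)/2)) <= 1) by (apply Rabs_le; apply COS_bound).
  assert (0 <= Rabs (sin ((y - x) / 2))) by apply Rabs_pos.
  assert (0 <= Rabs (cos ((x+y)/2))) by apply Rabs_pos.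
  nra.
Qed.

Lemma big_x x : 3 <= x -> x - sin x <= x^2/3.
Proof.
  intros hx. pose proof PI2_3_2. pose proof PI_4.
  destruct (Rle_dec x PI).
  - assert (0 <= sin x) by (apply sin_ge_0; lra). nra.
  - assert (sin (x - PI) = - sin x) by (rewrite sin_minus, sin_PI, cos_PI; ring).
    pose proof (abs_sin_le (x - PI) ltac:(lra)).
    assert (- sin x <= x - PI) by (pose proof (Rle_abs (sin (x - PI))); lra).
    nra.
Qed.

Lemma small_x x : 0 <= x <= 3 -> x - sin x <= x^3/6 - x^5/120 + x^7/5040.
Proof.
  intros hx. destruct (pre_sin_bound x 1 ltac:(lra) ltac:(lra)) as [H _].
  unfold sin_approx, sin_term in H. simpl in H.
  unfold Factorial.fact in H. simpl in H. lra.
Qed.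

Lemma div_le_helper a b c : 0 < c -> a <= b * c -> a / c <= b.
Proof.
  intros hc h. unfold Rdiv.
  replace b with (b * c * / c) by (field; lra).
  apply Rmult_le_compat_r. apply Rlt_le, Rinv_0_lt_compat; lra. exact h.
Qed.

Lemma part1 nu alpha beta : (1 <= nu)%nat -> 1 < alpha -> 1 < beta ->
  alpha <= (2 * INR nu + 1) / sqrt 2 ->
  S1_le nu alpha (u1 beta nu * alpha + u2 beta nu).
Proof.
  intros hnu ha hb hal t [ht0 ht1].
  assert (hm : 1 <= INR nu) by (apply (le_INR 1); auto).
  set (N := 2 * INR nu + 1) in *.
  assert (hN : 3 <= N) by (unfold N; lra).
  assert (hs2 : sqrt 2 * sqrt 2 = 2) by (apply sqrt_sqrt; lra).
  assert (hs0 : 0 < sqrt 2) by (apply sqrt_lt_R0; lra).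
  assert (hxa : N * t <= alpha).
  { apply (Rmult_le_reg_r (/N)). apply Rinv_0_lt_compat; lra.
    replace (N * t * / N) with t by (field; lra). exact ht1. }
  assert (hts : t * sqrt 2 <= 1).
  { assert (alpha * sqrt 2 <= N).
    { apply (Rmult_le_compat_r (sqrt 2)) in hal; [|lra].
      replace (N / sqrt 2 * sqrt 2) with N in hal by (field; lra). exact hal. }
    assert (N * t * sqrt 2 <= N * 1) by nra.
    apply (Rmult_le_reg_l N); lra. }
  assert (ht2 : 2 * t^2 <= 1) by nra.
  assert (ht1' : t <= 1) by nra.
  set (th := asin t).
  assert (Hs : sin th = t) by (apply sin_asin; lra).
  pose proof (asin_bound t) as Hb. fold th in Hb.
  pose proof PI2_3_2 as Hpi.
  assert (Hth0 : 0 < th).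
  { apply sin_increasing_0; try lra. rewrite sin_0, Hs. lra. }
  assert (Hth1 : th <= 4/5).
  { destruct (Rle_dec th (4/5)) as [r|r]; auto. exfalso.
    assert (sin (4/5) < sin th) by (apply sin_increasing_1; lra).
    destruct (pre_sin_bound (4/5) 0 ltac:(lra) ltac:(lra)) as [H45 _].
    unfold sin_approx, sin_term in H45. simpl in H45. unfold Factorial.fact in H45. simpl in H45.
    rewrite Hs in H. nra. }
  assert (Hsl : th - th^3/6 <= t).
  { destruct (pre_sin_bound th 0 ltac:(lra) ltac:(lra)) as [H _].
    unfold sin_approx, sin_term in H. simpl in H. unfold Factorial.fact in H. simpl in H.
    rewrite Hs in H. lra. }
  assert (Htt : t <= th).
  { rewrite <- Hs. left. apply sin_lt_x. lra. }
  assert (Hd : th - t <= t^3/4).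
  { assert (th <= 28/25 * t) by nra.
    assert (th^3 <= (28/25*t)^3).
    { apply pow_incr. lra. }
    nra. }
  set (x := N * t). set (y := N * th).
  assert (hxa' : x <= alpha) by exact hxa. clear hxa. rename hxa' into hxa.
  assert (C : cheb (2*nu+1) t = (-1)^nu * sin y).
  { rewrite <- Hs at 1. rewrite cheb_sin. reflexivity. }
  unfold ratio1. fold N. rewrite C.
  replace ((-1) ^ nu * N * t - (-1) ^ nu * sin y) with ((-1)^nu * (x - sin y)) by (unfold x; ring).
  rewrite Rabs_mult, pow_1_abs, Rmult_1_l. fold x.
  assert (hx0 : 0 < x) by (unfold x; nra).
  assert (hxy : x <= y) by (unfold x, y; nra).
  assert (Hsx : sin x < x) by (apply sin_lt_x; lra).
  assert (Habs : Rabs (x - sin y) <= (x - sin x) + (y - x)).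
  { replace (x - sin y) with ((x - sin x) + (sin x - sin y)) by ring.
    eapply Rle_trans. apply Rabs_triang.
    rewrite (Rabs_right (x - sin x)) by lra.
    pose proof (sin_lip x y hxy). lra. }
  set (k := / N).
  assert (hk0 : 0 < k) by (unfold k; apply Rinv_0_lt_compat; lra).
  assert (hk1 : k <= 1/3).
  { unfold k. apply (Rmult_le_reg_l N). lra. rewrite Rinv_r by lra. lra. }
  assert (hkN : k * N = 1) by (unfold k; field; lra).
  assert (Hyx : y - x <= alpha * k^2 / 4 * x^2).
  { assert (y - x = N * (th - t)) by (unfold x, y; ring).
    assert (N * (th - t) <= N * (t^3/4)) by (apply Rmult_le_compat_l; lra).
    assert (N * (t^3/4) = x * k^2/4 * x^2).
    { assert (E1 : x * k^2/4 * x^2 = (k*N)^2 * (N * t^3/4)) by (unfold x; field).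
      rewrite E1, hkN. field. }
    assert (x * k^2/4 * x^2 <= alpha * k^2/4 * x^2).
    { assert (0 <= (alpha - x) * (k^2 * x^2)).
      { apply Rmult_le_pos. lra. apply Rmult_le_pos; apply pow2_ge_0. }
      lra. }
    lra. }
  pose proof (G_bound beta nu alpha hb hnu ltac:(lra)) as HG. cbv zeta in HG. fold N k in HG.
  apply div_le_helper. nra.
  destruct (Rle_dec alpha 3) as [ha3|ha3].
  -
    assert (Hx : x - sin x <= pp alpha * x^2).
    { pose proof (small_x x ltac:(lra)).
      pose proof (pp_mono x alpha ltac:(lra) hxa ha3).
      assert (pp x * x^2 <= pp alpha * x^2) by (apply Rmult_le_compat_r; nra).
      unfold pp in *. nra. }
    pose proof (Qa alpha k ltac:(lra) ltac:(lra)).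
    assert ((pp alpha + alpha * k^2/4) * x^2 <= (u1 beta nu * alpha + u2 beta nu) * x^2)
      by (apply Rmult_le_compat_r; nra).
    nra.
  - assert (Hx : x - sin x <= 1/3 * x^2).
    { destruct (Rle_dec x 3).
      - pose proof (small_x x ltac:(lra)).
        pose proof (pp3 x ltac:(lra)).
        assert (pp x * x^2 <= 1/3 * x^2) by (apply Rmult_le_compat_r; nra).
        unfold pp in *. nra.
      - pose proof (big_x x ltac:(lra)). lra. }
    pose proof (Qb alpha k ltac:(lra) ltac:(lra)).
    assert ((1/3 + alpha * k^2/4) * x^2 <= (u1 beta nu * alpha + u2 beta nu) * x^2)
      by (apply Rmult_le_compat_r; nra).
    nra.
Qed.

Lemma u1_52 nu : (31 <= nu)%nat -> u1 (5/2) nu <= 2344592 / 31255875.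
Proof.
  intros h. assert (hn : 31 <= INR nu) by (apply (le_INR 31) in h; simpl in h; lra).
  unfold u1. cbv zeta. set (n := INR nu) in *.
  assert (hd : 0 < 3 * (5/2) ^ 3 * (2 * n + 1) ^ 3) by (assert (0 < (2*n+1)^3) by (apply pow_lt; lra); nra).
  apply div_le_helper. exact hd.
  assert (E : 2344592 / 31255875 * (3 * (5/2) ^ 3 * (2 * n + 1) ^ 3) -
    ((12 * (5/2) - 8) * n ^ 3 + (12 * (5/2) ^ 3 + 18 * (5/2)) * n ^ 2 + 2 * (5/2) ^ 2 * n)
    = (n - 31) * (510914/83349 * n^2 - 46841/166698 * n - 9454/83349)) by field.
  assert (0 <= 510914/83349 * n^2 - 46841/166698 * n - 9454/83349) by nra.
  assert (0 <= (n - 31) * (510914/83349 * n^2 - 46841/166698 * n - 9454/83349)) by (apply Rmult_le_pos; lra).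
  lra.
Qed.

Lemma u2_52 nu : (31 <= nu)%nat -> u2 (5/2) nu <= 6076 / 33075.
Proof.
  intros h. assert (hn : 31 <= INR nu) by (apply (le_INR 31) in h; simpl in h; lra).
  unfold u2. cbv zeta. set (n := INR nu) in *.
  assert (hd : 0 < (5/2) ^ 2 * (2 * n + 1) ^ 2) by (assert (0 < (2*n+1)^2) by (apply pow_lt; lra); nra).
  apply div_le_helper. exact hd.
  assert (E : 6076 / 33075 * ((5/2) ^ 2 * (2 * n + 1) ^ 2) -
    (2 * (5/2 - 1) ^ 2 * n ^ 2 + 2 * (5/2) * (5/2 - 1) * n)
    = (n - 31) * (5/54 * n - 1/27)) by field.
  assert (0 <= (n - 31) * (5/54 * n - 1/27)) by (apply Rmult_le_pos; lra).
  lra.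
Qed.

Lemma part2 nu alpha : (31 <= nu)%nat ->
  (2 * INR nu + 1) / (2 * floorR (2 * INR nu / 5) + 1) <= alpha ->
  alpha <= (2 * INR nu + 1) / sqrt 2 ->
  S1_le nu alpha (2344592 / 31255875 * alpha + 6076 / 33075).
Proof.
  intros h hl hu.
  assert (hn : 31 <= INR nu) by (apply (le_INR 31) in h; simpl in h; lra).
  assert (ha : 1 < alpha).
  { unfold floorR in hl. destruct (base_Int_part (2 * INR nu / 5)) as [F1 F2].
    set (z := Int_part (2 * INR nu / 5)) in *.
    assert (hz : (0 <= z)%Z).
    { assert (-1 < IZR z) by lra. apply lt_IZR in H. lia. }
    apply IZR_le in hz.
    assert (1 < (2 * INR nu + 1) / (2 * IZR z + 1)).
    { apply (Rmult_lt_reg_r (2 * IZR z + 1)). lra.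
      unfold Rdiv. rewrite Rmult_assoc, Rinv_l by lra. lra. }
    lra. }
  pose proof (part1 nu alpha (5/2) ltac:(lia) ha ltac:(lra) hu) as P.
  intros t ht. specialize (P t ht).
  pose proof (u1_52 nu h). pose proof (u2_52 nu h).
  assert (u1 (5/2) nu * alpha <= 2344592 / 31255875 * alpha) by (apply Rmult_le_compat_r; lra).
  lra.
Qed.

Theorem mainTheorem4 :
  (forall (nu : nat) (alpha beta : R),
      (1 <= nu)%nat -> 1 < alpha -> 1 < beta ->
      (2 * INR nu + 1) / (2 * floorR (INR nu / beta) + 1) <= alpha ->
      alpha <= (2 * INR nu + 1) / sqrt 2 ->
      S1_le nu alpha (u1 beta nu * alpha + u2 beta nu))
  /\
  (forall (nu : nat) (alpha : R),
      (31 <= nu)%nat ->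
      (2 * INR nu + 1) / (2 * floorR (2 * INR nu / 5) + 1) <= alpha ->
      alpha <= (2 * INR nu + 1) / sqrt 2 ->
      S1_le nu alpha (2344592 / 31255875 * alpha + 6076 / 33075)).
Proof.
  split.
  - intros nu alpha beta h1 h2 h3 _ h5. exact (part1 nu alpha beta h1 h2 h3 h5).
  - exact part2.
Qed.
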